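(* For every metric space $(X,d_X)$, every $q\in[1,\infty)$ and every $m,n\in\mathbb{N}$, $$\mathcal{C}^{\{-1,0,1\}}_{q,m,n}(X,d_X)\le 6^{1/q}\max_{k\in\{1,\dots,n\}}\mathcal{C}^{\{-1,1\}}_{q,m,k}(X,d_X)\qquad\text{and}\qquad \mathcal{C}^{\{-1,1\}}_{q,2m,n}(X,d_X)\le 2\,\mathcal{C}^{\{-1,0,1\}}_{q,m,n}(X,d_X).$$
   Context: $\mathbb{Z}_{2m}=\mathbb{Z}/2m\mathbb{Z}$, arithmetic mod $2m$, $e_i$ the standard basis. $\mathcal{C}^{\{-1,0,1\}}_{q,m,n}(X,d_X)$ is the infimum of $\mathcal{C}>0$ such that every $f:\mathbb{Z}_{2m}^n\to X$ satisfies $\big(\sum_{i=1}^n\sum_{x\in\mathbb{Z}_{2m}^n}d_X(f(x+me_i),f(x))^q\big)^{1/q}\le\mathcal{C}m\big(3^{-n}\sum_{\varepsilon\in\{-1,0,1\}^n}\sum_{x\in\mathbb{Z}_{2m}^n}d_X(f(x+\varepsilon),f(x))^q\big)^{1/q}$. $\mathcal{C}^{\{-1,1\}}_{q,m,n}(X,d_X)$ is the infimum of $\mathcal{C}_*>0$ such that every $f:\mathbb{Z}_{2m}^n\to X$ satisfies the same inequality with the right-hand average replaced by $2^{-n}\sum_{\varepsilon\in\{-1,1\}^n}\sum_{x\in\mathbb{Z}_{2m}^n}d_X(f(x+\varepsilon),f(x))^q$ and $\mathcal{C}$ by $\mathcal{C}_*$. *)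

(* Defs.v *)
From HB Require Import structures.
From mathcomp Require Import all_boot all_order all_algebra.
From Stdlib Require Import Reals ClassicalEpsilon.

Set Implicit Arguments. Unset Strict Implicit. Unset Printing Implicit Defensive.

Record metric_space := MetricSpace {
  carrier : Type;
  dist : carrier -> carrier -> R;
  dist_nonneg : forall x y, (0 <= dist x y)%R;
  dist_eq0 : forall x y, dist x y = 0%R <-> x = y;
  dist_sym : forall x y, dist x y = dist y x;
  dist_tri : forall x y z, (dist x z <= dist x y + dist y z)%R
}.

Section Torus.
Local Open Scope ring_scope.
Variables (m n : nat).

Definition pt := {ffun 'I_n -> 'Z_(2 * m)}.

Definition shift (x : pt) (v : 'I_n -> 'Z_(2 * m)) : pt := [ffun j => x j + v j].

Definition medge (i : 'I_n) : 'I_n -> 'Z_(2 * m) :=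
  fun j => if j == i then (m%:R : 'Z_(2 * m)) else 0.

(* eps in {-1,0,1}^n, encoded by e : 'I_n -> 'I_3 via eps_j = e_j - 1 *)
Definition tern (e : {ffun 'I_n -> 'I_3}) : 'I_n -> 'Z_(2 * m) :=
  fun j => (nat_of_ord (e j))%:R - 1.

(* eps in {-1,1}^n, encoded by b : 'I_n -> bool via eps_j = if b_j then 1 else -1 *)
Definition sgnv (b : {ffun 'I_n -> bool}) : 'I_n -> 'Z_(2 * m) :=
  fun j => if b j then 1 else -1.
End Torus.

Local Open Scope R_scope.

(* real power t^s, with 0^s = 0 (used only with s > 0) *)
Definition rpow (t s : R) : R := if Rle_dec t 0 then 0 else Rpower t s.

Definition Rsum (T : finType) (F : T -> R) : R := \big[Rplus/0]_(x : T) F x.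

Definition lhs (X : metric_space) (q : R) (m n : nat) (f : pt m n -> carrier X) : R :=
  rpow (Rsum (fun i : 'I_n => Rsum (fun x : pt m n =>
          rpow (dist (f (shift x (medge m i))) (f x)) q))) (/ q).

Definition rhs0 (X : metric_space) (q : R) (m n : nat) (f : pt m n -> carrier X) : R :=
  rpow (/ (3 ^ n) * Rsum (fun e : {ffun 'I_n -> 'I_3} => Rsum (fun x : pt m n =>
          rpow (dist (f (shift x (tern m e))) (f x)) q))) (/ q).

Definition rhs1 (X : metric_space) (q : R) (m n : nat) (f : pt m n -> carrier X) : R :=
  rpow (/ (2 ^ n) * Rsum (fun b : {ffun 'I_n -> bool} => Rsum (fun x : pt m n =>
          rpow (dist (f (shift x (sgnv m b))) (f x)) q))) (/ q).

Definition admissible0 (X : metric_space) (q : R) (m n : nat) (C : R) : Prop :=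
  0 < C /\ forall f : pt m n -> carrier X, @lhs X q m n f <= C * INR m * @rhs0 X q m n f.

Definition admissible1 (X : metric_space) (q : R) (m n : nat) (C : R) : Prop :=
  0 < C /\ forall f : pt m n -> carrier X, @lhs X q m n f <= C * INR m * @rhs1 X q m n f.

(* ---------- Extended reals [-oo excluded]: None = +oo ---------- *)
Definition ereal := option R.

Definition is_glb (P : R -> Prop) (a : R) : Prop :=
  (forall C, P C -> a <= C) /\ (forall b, (forall C, P C -> b <= C) -> b <= a).

Definition is_einf (P : R -> Prop) (o : ereal) : Prop :=
  match o with
  | None => forall C, ~ P C
  | Some a => is_glb P a
  end.

Definition einf (P : R -> Prop) : ereal :=
  epsilon (inhabits None) (fun o => is_einf P o).

Definition ele (a b : ereal) : Prop :=
  match a, b with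
  | _, None => True
  | None, Some _ => False
  | Some x, Some y => x <= y
  end.

Definition escale (c : R) (a : ereal) : ereal :=
  match a with None => None | Some x => Some (c * x) end.

Definition emax (a b : ereal) : ereal :=
  match a, b with
  | Some x, Some y => Some (Rmax x y)
  | _, _ => None
  end.

(* max_{k in {1..n}} g k ; all constants are >= 0, so the base value 0 is harmless *)
Definition emax_range (g : nat -> ereal) (n : nat) : ereal :=
  foldr (fun k acc => emax (g k) acc) (Some 0) (iota 1 n).

Definition C_pm0 (X : metric_space) (q : R) (m n : nat) : ereal :=
  einf (admissible0 X q m n).
Definition C_pm1 (X : metric_space) (q : R) (m n : nat) : ereal :=
  einf (admissible1 X q m n).

(* Main.v *)
Require Import Defs.
From HB Require Import structures.
From mathcomp Require Import all_boot all_algebra.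
From Stdlib Require Import Reals Lra Lia ClassicalEpsilon Classical.
From mathcomp Require Import zify.
From mathcomp Require algebra_tactics.ring.
Set Implicit Arguments. Unset Strict Implicit. Unset Printing Implicit Defensive.
Import GRing.Theory.

Local Open Scope R_scope.

Lemma RplusA : associative Rplus. Proof. by move=> *; rewrite Rplus_assoc. Qed.
HB.instance Definition _ := Monoid.isComLaw.Build R 0 Rplus RplusA Rplus_comm Rplus_0_l.

Section RsumLemmas.
Variable T : finType.

Lemma Rsum_le (F G : T -> R) : (forall x, F x <= G x) -> Rsum F <= Rsum G.
Proof.
move=> H; rewrite /Rsum; apply: (big_ind2 (fun a b => a <= b)) => //.
- lra.
- by move=> ? ? ? ? ? ?; apply: Rplus_le_compat.
Qed.

Lemma Rsum_ge0 (F : T -> R) : (forall x, 0 <= F x) -> 0 <= Rsum F.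
Proof.
move=> H; rewrite /Rsum; apply: (big_ind (fun a => 0 <= a)) => //.
- lra.
- by move=> ? ? ? ?; lra.
Qed.

Lemma Rsum_add (F G : T -> R) : Rsum (fun x => F x + G x) = Rsum F + Rsum G.
Proof. by rewrite /Rsum big_split. Qed.

Lemma Rsum_scal (c : R) (F : T -> R) : Rsum (fun x => c * F x) = c * Rsum F.
Proof.
rewrite /Rsum; apply: (big_ind2 (fun a b => a = c * b)) => //.
- lra.
- by move=> ? ? ? ? -> ->; lra.
Qed.

Lemma Rsum_const (c : R) : Rsum (fun _ : T => c) = INR #|T| * c.
Proof.
rewrite /Rsum big_const; elim: #|T| => [|k IH] /=; first lra.
rewrite IH; case: k {IH} => [|k] /=; lra.
Qed.

Lemma Rsum_ext (F G : T -> R) : (forall x, F x = G x) -> Rsum F = Rsum G.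
Proof. by move=> H; rewrite /Rsum; apply: eq_bigr. Qed.

Lemma Rsum_reindex (h : T -> T) (F : T -> R) : injective h -> Rsum (fun x => F (h x)) = Rsum F.
Proof. by move=> hi; rewrite /Rsum; symmetry; apply: (reindex_inj hi). Qed.

End RsumLemmas.

Lemma Rsum_exchange (T1 T2 : finType) (F : T1 -> T2 -> R) :
  Rsum (fun x => Rsum (fun y => F x y)) = Rsum (fun y => Rsum (fun x => F x y)).
Proof. by rewrite /Rsum exchange_big. Qed.

Lemma card_gt0_INR (T : finType) (x : T) : 0 < INR #|T|.
Proof.
have h : (0 < #|T|)%nat by apply/card_gt0P; exists x.
by apply: lt_0_INR; apply/ltP.
Qed.

Lemma rpow_le0 t s : t <= 0 -> rpow t s = 0.
Proof. by move=> h; rewrite /rpow; case: (Rle_dec t 0) => h' /=. Qed.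

Lemma rpow_pos t s : 0 < t -> rpow t s = Rpower t s.
Proof. by move=> h; rewrite /rpow; case: (Rle_dec t 0) => h' /= //; lra. Qed.

Lemma rpow_ge0 t s : 0 <= rpow t s.
Proof.
case: (Rle_dec t 0) => h; first by rewrite rpow_le0 //; lra.
rewrite rpow_pos; [left; apply: exp_pos|lra].
Qed.

Lemma rpow_le t u s : 0 < s -> 0 <= t -> t <= u -> rpow t s <= rpow u s.
Proof.
move=> hs ht htu.
case: (Rle_dec t 0) => h1; first by rewrite rpow_le0 //; apply: rpow_ge0.
rewrite !rpow_pos; try lra.
apply: Rle_Rpower_l; lra.
Qed.

Lemma rpow_mul a b s : 0 <= a -> 0 <= b -> rpow (a * b) s = rpow a s * rpow b s.
Proof.
move=> ha hb; case: (Req_dec a 0) => [->|ha'].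
  by rewrite Rmult_0_l !(@rpow_le0 0) //; lra.
case: (Req_dec b 0) => [->|hb'].
  by rewrite Rmult_0_r !(@rpow_le0 0) //; lra.
have ha2 : 0 < a by lra. have hb2 : 0 < b by lra.
rewrite !rpow_pos //; last by apply: Rmult_lt_0_compat.
by rewrite Rpower_mult_distr.
Qed.

Lemma rpow_inv t s : 0 < s -> 0 <= t -> rpow (rpow t s) (/ s) = t.
Proof.
move=> hs ht; case: (Req_dec t 0) => [->|h].
  by rewrite !(@rpow_le0 0) //; lra.
have ht2 : 0 < t by lra.
rewrite (rpow_pos _ ht2) rpow_pos; last by apply: exp_pos.
rewrite Rpower_mult Rinv_r; last lra.
by rewrite Rpower_1.
Qed.

Lemma rpow_inv' t s : 0 < s -> 0 <= t -> rpow (rpow t (/ s)) s = t.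
Proof.
move=> hs ht; have := @rpow_inv t (/ s) (Rinv_0_lt_compat _ hs) ht.
by rewrite Rinv_inv.
Qed.

Lemma rpow_gt0 t s : 0 < t -> 0 < rpow t s.
Proof. by move=> h; rewrite rpow_pos //; apply: exp_pos. Qed.

Lemma root_le_pow a b c s : 0 < s -> 0 <= a -> 0 <= b -> 0 < c ->
  rpow a (/ s) <= c * rpow b (/ s) -> a <= rpow c s * b.
Proof.
move=> hs ha hb hc H.
have := @rpow_le _ _ s hs (rpow_ge0 _ _) H.
rewrite rpow_inv' // rpow_mul; [|lra|apply: rpow_ge0].
by rewrite rpow_inv'.
Qed.

Lemma pow_le_root a b c s : 0 < s -> 0 <= a -> 0 <= b -> 0 < c ->
  a <= rpow c s * b -> rpow a (/ s) <= c * rpow b (/ s).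
Proof.
move=> hs ha hb hc H.
have hs' : 0 < / s by apply: Rinv_0_lt_compat.
have := @rpow_le _ _ (/ s) hs' ha H.
rewrite rpow_mul; [|apply: rpow_ge0|lra].
by rewrite rpow_inv //; lra.
Qed.

Lemma rpow_add_le a b s : 0 < s -> 0 <= a -> 0 <= b ->
  rpow (a + b) s <= rpow 2 s * (rpow a s + rpow b s).
Proof.
move=> hs ha hb.
have h1 : a + b <= 2 * Rmax a b by move: (Rmax_l a b) (Rmax_r a b); lra.
apply: Rle_trans (rpow_le hs _ h1) _; first lra.
rewrite rpow_mul; [|lra|apply: Rle_trans (Rmax_l a b); lra].
apply: Rmult_le_compat_l; first exact: rpow_ge0.
have := rpow_ge0 a s; have := rpow_ge0 b s.
rewrite /Rmax; case: Rle_dec => _; lra.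
Qed.

Lemma rpow2_ge2 s : 1 <= s -> 2 <= rpow 2 s.
Proof.
move=> hs; rewrite rpow_pos; last lra.
have := @Rle_Rpower 2 1 s ltac:(lra) hs.
by rewrite Rpower_1; lra.
Qed.

Local Open Scope R_scope.

Lemma einf_spec (P : R -> Prop) : (forall C, P C -> 0 <= C) -> is_einf P (einf P).
Proof.
move=> H; apply: epsilon_spec.
case: (classic (exists C, P C)) => [[C0 HC0]|hn]; last first.
  by exists None => C hC; apply: hn; exists C.
pose E := fun x => P (- x).
have hb : bound E by exists 0 => x Ex; have := H _ Ex; lra.
have he : exists x, E x by exists (- C0); rewrite /E Ropp_involutive.
case: (completeness E hb he) => l [hl1 hl2].
exists (Some (- l)); split.
- move=> C hC; have : E (- C) by rewrite /E Ropp_involutive.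
  move/hl1; lra.
- move=> b hbC; suff : l <= - b by lra.
  apply: hl2 => x Ex; have := hbC _ Ex; lra.
Qed.

Lemma einf_some_ne (P : R -> Prop) a : is_einf P (Some a) -> exists C, P C.
Proof.
move=> [_ h2]; apply: NNPP => hn.
have : a + 1 <= a by apply: h2 => C hC; exfalso; apply: hn; exists C.
lra.
Qed.

Lemma einf_none_empty (P : R -> Prop) C : is_einf P None -> P C -> False.
Proof. by move=> h; apply: h. Qed.

Lemma emax_range_spec (g : nat -> ereal) n s K :
  foldr (fun k acc => emax (g k) acc) (Some 0) (iota s n) = Some K ->
  0 <= K /\ forall k, (s <= k)%nat -> (k < s + n)%nat -> exists c, g k = Some c /\ c <= K.
Proof.
elim: n s K => [|n IH] s K /=.
  by case=> <-; split; [lra|move=> k h1 h2; exfalso; rewrite addn0 in h2; move: h1 h2; lia].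
case E1: (g s) => [x|] //; case E2: (foldr _ _ _) => [y|] //= [<-].
have [hy hk] := IH _ _ E2.
split; first by apply: Rle_trans (Rmax_r x y).
move=> k h1 h2; case: (eqVneq k s) => [->|hne].
  by exists x; split => //; apply: Rmax_l.
have [c [hc1 hc2]] := hk k ltac:(lia) ltac:(lia).
by exists c; split => //; apply: Rle_trans (Rmax_r x y).
Qed.

Section Torus.
Variables (m n : nat).
Local Open Scope ring_scope.

Lemma shift_shift (x : pt m n) v w :
  shift (shift x v) w = shift x (fun j => v j + w j).
Proof. by apply/ffunP => j; rewrite !ffunE GRing.addrA. Qed.

Lemma shift_inj v : injective (fun x : pt m n => shift x v).
Proof.
move=> x y /= /ffunP h; apply/ffunP => j; move: (h j); rewrite !ffunE.
by move/(congr1 (fun a => a - v j)); rewrite !GRing.addrK.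
Qed.

Lemma Rsum_shift (F : pt m n -> R) v : Rsum (fun x => F (shift x v)) = Rsum F.
Proof. by rewrite (Rsum_reindex F (@shift_inj v)). Qed.

Lemma Rsum_avg (Z : finType) (tau : Z -> 'I_n -> 'Z_(2 * m)) (F : pt m n -> R) :
  Rsum (fun y => Rsum (fun z => F (shift y (tau z)))) = Rmult (INR #|Z|) (Rsum F).
Proof.
rewrite Rsum_exchange (Rsum_ext (G := fun _ => Rsum F)); first by rewrite Rsum_const.
by move=> z; rewrite Rsum_shift.
Qed.
End Torus.

Section Dbl.
Local Open Scope ring_scope.
Variables (m n : nat).
Hypothesis mpos : (0 < m)%nat.

Definition phi (a : 'Z_(2 * m)) : 'Z_(2 * (2 * m)) := (2 * nat_of_ord a)%nat%:R.

Lemma phi_nat k : phi (k%:R) = (2 * k)%nat%:R.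
Proof.
rewrite /phi val_Zp_nat; last lia.
by rewrite muln_modr Zp_nat_mod //; lia.
Qed.

Lemma phi_add a b : phi (a + b) = phi a + phi b.
Proof.
rewrite -[a]natr_Zp -[b]natr_Zp -natrD phi_nat !phi_nat.
by rewrite mulnDr natrD.
Qed.

Lemma phi_opp a : phi (- a) = - phi a.
Proof.
apply/eqP; rewrite -subr_eq0 opprK -phi_add addNr.
by rewrite -(natr_Zp 0) /= phi_nat muln0.
Qed.

Lemma phi_sub a b : phi (a - b) = phi a - phi b.
Proof. by rewrite phi_add phi_opp. Qed.

Definition dbl (z : pt m n) : pt (2 * m) n := [ffun j => phi (z j)].

Lemma dbl_shift z v : dbl (shift z v) = shift (dbl z) (fun j => phi (v j)).
Proof. by apply/ffunP => j; rewrite !ffunE phi_add. Qed.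

Lemma phi_medge (i j : 'I_n) : phi (medge m i j) = medge (2 * m) i j.
Proof.
rewrite /medge; case: (j == i); first by rewrite phi_nat.
by rewrite -(natr_Zp 0) phi_nat muln0.
Qed.

End Dbl.


Module SubE.

Definition o0 : 'I_3 := @Ordinal 3 0 isT.
Definition o1 : 'I_3 := @Ordinal 3 1 isT.
Definition o2 : 'I_3 := @Ordinal 3 2 isT.

Lemma I3_cases (a : 'I_3) : [\/ a = o0, a = o1 | a = o2].
Proof.
case: a => [[|[|[|k]]] h]; [apply: Or31|apply: Or32|apply: Or33|by []];
  by apply: val_inj.
Qed.

Definition hh (a : 'I_3) (c : bool) : bool :=
  if a == o2 then true else if a == o0 then false else c.
Definition kk (a : 'I_3) (c : bool) : 'I_3 :=
  if a == o1 then o2 else if c then o0 else o1.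

Lemma hk_inj a c a' c' : hh a c = hh a' c' -> kk a c = kk a' c' -> a = a' /\ c = c'.
Proof.
by case: (I3_cases a) => ->; case: (I3_cases a') => ->; case: c; case: c'.
Qed.

Section Comb.
Variable n : nat.
Definition Psi (p : {ffun 'I_n -> 'I_3} * {ffun 'I_n -> bool}) :
  {ffun 'I_n -> 'I_3} * {ffun 'I_n -> bool} :=
  ([ffun j => kk (p.1 j) (p.2 j)], [ffun j => hh (p.1 j) (p.2 j)]).

Lemma Psi_inj : injective Psi.
Proof.
move=> [e b] [e' b'] [/ffunP h1 /ffunP h2].
have H j : e j = e' j /\ b j = b' j.
  by apply: hk_inj; [move: (h2 j) | move: (h1 j)]; rewrite !ffunE.
by congr pair; apply/ffunP => j; case: (H j).
Qed.

Definition dl (e : {ffun 'I_n -> 'I_3}) (b : {ffun 'I_n -> bool}) : {ffun 'I_n -> bool} :=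
  [ffun j => hh (e j) (b j)].

Local Open Scope R_scope.
Lemma sum_dl (G : {ffun 'I_n -> bool} -> R) :
  Rsum (fun e : {ffun 'I_n -> 'I_3} => Rsum (fun b => G (dl e b))) =
  INR #|{ffun 'I_n -> 'I_3}| * Rsum G.
Proof.
rewrite -Rsum_const; rewrite /Rsum pair_big /=.
transitivity (\big[Rplus/0]_(p : {ffun 'I_n -> 'I_3} * {ffun 'I_n -> bool}) G (Psi p).2) => //.
rewrite -(reindex_inj (P := xpredT) (F := fun p => G p.2) Psi_inj) /=.
by rewrite pair_big.
Qed.

Lemma sum_negb (G : {ffun 'I_n -> bool} -> R) :
  Rsum (fun b : {ffun 'I_n -> bool} => G [ffun j => ~~ b j]) = Rsum G.
Proof.
apply: Rsum_reindex => b b' /ffunP h; apply/ffunP => j.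
by move: (h j); rewrite !ffunE => /negb_inj.
Qed.

End Comb.

End SubE.
Import SubE.

Module SubF.
Import algebra_tactics.ring.
Local Open Scope ring_scope.

Lemma phi_one m : (0 < m)%nat -> phi (1 : 'Z_(2 * m)) = (2%nat)%:R.
Proof. by move=> hm; have := phi_nat hm 1; rewrite mulr1n. Qed.

Lemma tern_split m n (e : {ffun 'I_n -> 'I_3}) b j : (0 < m)%nat ->
  phi (tern m e j) = (sgnv (2 * m) (dl e b) j + sgnv (2 * m) (dl e [ffun j => ~~ b j]) j).
Proof.
move=> hm; rewrite /tern phi_sub // phi_nat // phi_one // /sgnv /dl !ffunE.
case: (I3_cases (e j)) => ->; case: (b j); rewrite /hh /=; ring.
Qed.

End SubF.
Import SubF.

Module SubG.

Section Part2.
Variables (X : metric_space) (q : R) (m n : nat).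
Hypothesis hq : (1 <= q)%R.
Hypothesis hm : (0 < m)%nat.
Variable f : pt (2 * m) n -> carrier X.
Local Open Scope R_scope.

Definition Sv (v : 'I_n -> 'Z_(2 * (2 * m))) : R :=
  Rsum (fun x => rpow (Defs.dist (f (shift x v)) (f x)) q).

Lemma Sv_ge0 v : 0 <= Sv v.
Proof. by apply: Rsum_ge0 => x; apply: rpow_ge0. Qed.

Lemma step_A e b :
  Sv (fun j => phi (tern m e j)) <=
  rpow 2 q * (Sv (sgnv (2 * m) (dl e b)) + Sv (sgnv (2 * m) (dl e [ffun j => ~~ b j]))).
Proof.
set d1 := sgnv (2 * m) (dl e b); set d2 := sgnv (2 * m) (dl e [ffun j => ~~ b j]).
rewrite /Sv -[X in _ * (_ + X)](Rsum_shift _ d1) -Rsum_add -Rsum_scal.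
apply: Rsum_le => x.
have -> : shift x (fun j => phi (tern m e j)) = shift (shift x d1) d2.
  by rewrite shift_shift; apply/ffunP => j; rewrite !ffunE (tern_split _ b).
have hq0 : 0 < q by lra.
move: (rpow_le hq0 (Defs.dist_nonneg _ _) (Defs.dist_tri (f (shift (shift x d1) d2)) (f (shift x d1)) (f x))) => h.
apply: Rle_trans h _; rewrite (Rplus_comm (rpow (Defs.dist _ (f x)) q)).
by apply: rpow_add_le => //; apply: Defs.dist_nonneg.
Qed.

Definition S1tot := Rsum (fun d : {ffun 'I_n -> bool} => Sv (sgnv (2 * m) d)).

Lemma step_BC :
  Rsum (fun e : {ffun 'I_n -> 'I_3} => Sv (fun j => phi (tern m e j))) * INR #|{ffun 'I_n -> bool}|
  <= rpow 2 q * (2 * (INR #|{ffun 'I_n -> 'I_3}| * S1tot)).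
Proof.
rewrite Rmult_comm -Rsum_scal.
rewrite (Rsum_ext (G := fun e => Rsum (fun b : {ffun 'I_n -> bool} => Sv (fun j => phi (tern m e j))))); last first.
  by move=> e; rewrite Rsum_const.
apply: Rle_trans (Rsum_le (fun e => Rsum_le (fun b => step_A e b))) _.
rewrite (Rsum_ext (G := fun e => rpow 2 q * (Rsum (fun b => Sv (sgnv (2 * m) (dl e b))) + Rsum (fun b => Sv (sgnv (2 * m) (dl e b)))))); last first.
  move=> e; rewrite Rsum_scal Rsum_add; congr (_ * (_ + _)).
  exact: (sum_negb (fun b => Sv (sgnv (2 * m) (dl e b)))).
rewrite Rsum_scal Rsum_add.
rewrite (sum_dl (fun d => Sv (sgnv (2 * m) d))) /S1tot; right; ring.
Qed.


Lemma dbl_medge (y : pt (2 * m) n) (z : pt m n) i :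
  shift y (dbl (shift z (medge m i))) = shift (shift y (dbl z)) (medge (2 * m) i).
Proof.
by apply/ffunP => j; rewrite dbl_shift // !ffunE phi_medge // GRing.addrA.
Qed.

Lemma dbl_tern (y : pt (2 * m) n) (z : pt m n) e :
  shift y (dbl (shift z (tern m e))) = shift (shift y (dbl z)) (fun j => phi (tern m e j)).
Proof.
by apply/ffunP => j; rewrite dbl_shift // !ffunE GRing.addrA.
Qed.

End Part2.
Local Open Scope R_scope.

Lemma INR_expn a k : INR (expn a k) = INR a ^ k.
Proof.
elim: k => [|k IH]; first by rewrite expn0.
by rewrite expnS mult_INR IH /=.
Qed.

Lemma card_bool_ffun n : INR #|{ffun 'I_n -> bool}| = 2 ^ n.
Proof. by rewrite card_ffun card_bool card_ord INR_expn. Qed.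

Lemma card_I3_ffun n : INR #|{ffun 'I_n -> 'I_3}| = 3 ^ n.
Proof. rewrite card_ffun !card_ord INR_expn; f_equal; simpl; lra. Qed.


End SubG.
Import SubG.

Module SubH.
Local Open Scope R_scope.

Lemma card_pt_pos m n : 0 < INR #|pt m n|.
Proof.
apply: lt_0_INR; apply/ltP; apply/card_gt0P; by exists [ffun _ => GRing.zero].
Qed.

Lemma part2_core (X : metric_space) (q : R) (m n : nat) (C : R) :
  1 <= q -> (0 < m)%nat -> 0 < C ->
  (forall g : pt m n -> carrier X, lhs q g <= C * INR m * rhs0 q g) ->
  forall f : pt (2 * m) n -> carrier X, lhs q f <= (2 * C) * INR (2 * m) * rhs1 q f.
Proof.
move=> hq hm hC hyp f.
have hq0 : 0 < q by lra.
have hmR : 0 < INR m by apply: lt_0_INR; apply/ltP.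
set c := rpow (C * INR m) q.
have hc : 0 <= c by apply: rpow_ge0.
pose Fi i (x : pt (2 * m) n) := rpow (Defs.dist (f (shift x (medge (2 * m) i))) (f x)) q.
pose Ge e (x : pt (2 * m) n) := rpow (Defs.dist (f (shift x (fun j => phi (tern m e j)))) (f x)) q.
set L := Rsum (fun i => Rsum (Fi i)).
have key : forall y : pt (2 * m) n,
  Rsum (fun i => Rsum (fun z : pt m n => Fi i (shift y (dbl z)))) <=
  c * (/ 3 ^ n * Rsum (fun e => Rsum (fun z : pt m n => Ge e (shift y (dbl z))))).
  move=> y; have := hyp (fun z => f (shift y (dbl z))).
  rewrite /lhs /rhs0 /= => H.
  have hCm : 0 < C * INR m by apply: Rmult_lt_0_compat.
  have H2 := root_le_pow hq0 (Rsum_ge0 (fun i => Rsum_ge0 (fun z => rpow_ge0 _ _)))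
     (Rmult_le_pos _ _ (Rlt_le _ _ (Rinv_0_lt_compat _ (pow_lt 3 n ltac:(lra))))
        (Rsum_ge0 (fun e => Rsum_ge0 (fun z => rpow_ge0 _ _)))) hCm H.
  have e1 : Rsum (fun i => Rsum (fun z => rpow (Defs.dist (f (shift y (dbl (shift z (medge m i))))) (f (shift y (dbl z)))) q)) = Rsum (fun i => Rsum (fun z => Fi i (shift y (dbl z)))).
    by apply: Rsum_ext => i; apply: Rsum_ext => z; rewrite /Fi dbl_medge.
  have e2 : Rsum (fun e => Rsum (fun z => rpow (Defs.dist (f (shift y (dbl (shift z (tern m e))))) (f (shift y (dbl z)))) q)) = Rsum (fun e => Rsum (fun z => Ge e (shift y (dbl z)))).
    by apply: Rsum_ext => e; apply: Rsum_ext => z; rewrite /Ge dbl_tern.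
  by rewrite e1 e2 in H2.
set N := #|pt m n|.
have hN : 0 < INR N by apply: card_pt_pos.
have sumL : Rsum (fun y : pt (2 * m) n => Rsum (fun i => Rsum (fun z : pt m n => Fi i (shift y (dbl z))))) = INR N * L.
  rewrite Rsum_exchange /L -Rsum_scal; apply: Rsum_ext => i.
  exact: (Rsum_avg (fun z : pt m n => dbl z) (Fi i)).
have sumR : Rsum (fun y : pt (2 * m) n => c * (/ 3 ^ n * Rsum (fun e => Rsum (fun z : pt m n => Ge e (shift y (dbl z))))))
   = c * (/ 3 ^ n * (INR N * Rsum (fun e => Rsum (Ge e)))).
  rewrite Rsum_scal Rsum_scal Rsum_exchange; do 2 f_equal; rewrite -Rsum_scal.
  apply: Rsum_ext => e; exact: (Rsum_avg (fun z : pt m n => dbl z) (Ge e)).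
have HL := Rsum_le key; rewrite sumL sumR in HL.
set T := Rsum (fun e => Rsum (Ge e)) in HL.
have HL2 : L <= c * (/ 3 ^ n * T).
  apply: (Rmult_le_reg_l (INR N)) => //; lra.
have HBC := step_BC hq hm f.
rewrite card_bool_ffun card_I3_ffun in HBC.
set S1 := S1tot q f in HBC.
have h2n : 0 < 2 ^ n by apply: pow_lt; lra.
have h3n : 0 < 3 ^ n by apply: pow_lt; lra.
have hS1 : 0 <= S1 by apply: Rsum_ge0 => d; apply: Sv_ge0.
have hT : 0 <= T by apply: Rsum_ge0 => e; apply: Rsum_ge0 => x; apply: rpow_ge0.
have hr := rpow2_ge2 hq.
have HT : T <= rpow 2 q * 2 * 3 ^ n * (/ 2 ^ n * S1).
  apply: (Rmult_le_reg_r (2 ^ n)) => //.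
  apply: Rle_trans HBC _; right; field; lra.
have HL3 : L <= c * rpow 2 q * 2 * (/ 2 ^ n * S1).
  apply: Rle_trans HL2 _.
  apply: Rle_trans (Rmult_le_compat_l _ _ _ hc (Rmult_le_compat_l _ _ _ (Rlt_le _ _ (Rinv_0_lt_compat _ h3n)) HT)) _.
  right; field; lra.
rewrite /lhs /rhs1.
apply: pow_le_root => //.
- by apply: Rsum_ge0 => i; apply: Rsum_ge0 => x; apply: rpow_ge0.
- apply: Rmult_le_pos; [left; apply: Rinv_0_lt_compat => // | exact: hS1].
- apply: Rmult_lt_0_compat; [lra|]; apply: lt_0_INR; apply/ltP; lia.
have -> : 2 * C * INR (2 * m) = 2 * (2 * (C * INR m)) by rewrite mult_INR /=; ring.
have hCm : 0 <= C * INR m by apply: Rmult_le_pos; lra.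
rewrite (@rpow_mul 2 (2 * (C * INR m)) q); [|lra|lra].
rewrite (@rpow_mul 2 (C * INR m) q); [|lra|lra].
fold c.
apply: Rle_trans HL3 _.
have hA : 0 <= / 2 ^ n * S1 by apply: Rmult_le_pos; [left; apply: Rinv_0_lt_compat|].
have h0 : 0 <= c * rpow 2 q * (/ 2 ^ n * S1) by apply: Rmult_le_pos => //; apply: Rmult_le_pos => //; lra.
have := Rmult_le_compat_r _ _ _ h0 hr.
move=> h; apply: Rle_trans (_ : _ <= rpow 2 q * (c * rpow 2 q * (/ 2 ^ n * S1))) _; [lra|]; right; transitivity (rpow 2 q * (rpow 2 q * c) * (/ 2 ^ n * S1)); [ring|reflexivity].
Qed.

End SubH.
Import SubH.

Module SubI.
Import algebra_tactics.ring.

Section Sub.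
Local Open Scope ring_scope.
Variables (m n : nat) (S : {set 'I_n}).

Definition sig (i : 'I_#|S|) : 'I_n := enum_val i.

Lemma sig_inj : injective sig.
Proof. exact: enum_val_inj. Qed.

Lemma sigP i : sig i \in S.
Proof. exact: enum_valP. Qed.

Lemma sig_onto j : j \in S -> exists i, sig i = j.
Proof. by move=> hj; exists (enum_rank_in hj j); rewrite /sig enum_rankK_in. Qed.

Definition io (v : 'I_#|S| -> 'Z_(2 * m)) (j : 'I_n) : 'Z_(2 * m) :=
  \sum_(i < #|S|) (if sig i == j then v i else 0).

Lemma io_add v w j : io (fun i => v i + w i) j = io v j + io w j.
Proof.
rewrite /io -big_split /=; apply: eq_bigr => i _.
by case: (sig i == j); rewrite ?addr0.
Qed.

Lemma io_at v i : io v (sig i) = v i.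
Proof.
rewrite /io (bigD1 i) //= eqxx big1 ?addr0 // => i' hi'.
by rewrite (inj_eq sig_inj) (negbTE hi').
Qed.

Lemma io_out v j : j \notin S -> io v j = 0.
Proof.
move=> hj; rewrite /io big1 // => i _.
by case: eqP => // h; move: hj; rewrite -h sigP.
Qed.

Lemma io_medge i j : io (medge m i) j = medge m (sig i) j.
Proof.
case: (boolP (j \in S)) => hj; last first.
  rewrite io_out // /medge; case: eqP => // h; move: hj; by rewrite h sigP.
have [i' <-] := sig_onto hj.
by rewrite io_at /medge (inj_eq sig_inj).
Qed.

Definition Phi (b : {ffun 'I_#|S| -> bool}) : {ffun 'I_n -> 'I_3} :=
  [ffun j => if j \in S then (if [exists i, (sig i == j) && b i] then o2 else o0) else o1].

Lemma ex_sig (b : {ffun 'I_#|S| -> bool}) i : [exists i', (sig i' == sig i) && b i'] = b i.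
Proof.
apply/existsP/idP => [[i' /andP [/eqP /sig_inj -> //]]|hb].
by exists i; rewrite eqxx.
Qed.

Lemma Phi_tern b j : tern m (Phi b) j = io (sgnv m b) j.
Proof.
rewrite /tern ffunE; case: (boolP (j \in S)) => hj; last by rewrite io_out //= subrr.
have [i <-] := sig_onto hj.
rewrite io_at ex_sig /sgnv; case: (b i) => /=.
  ring.
ring.
Qed.


Definition supp (e : {ffun 'I_n -> 'I_3}) : {set 'I_n} := [set j | e j != o1].

Lemma Phi_inj : injective Phi.
Proof.
move=> b b' /ffunP h; apply/ffunP => i; move: (h (sig i)); rewrite !ffunE sigP !ex_sig.
by case: (b i); case: (b' i).
Qed.

Lemma Phi_supp b : supp (Phi b) = S.
Proof.
apply/setP => j; rewrite inE ffunE; case: (j \in S) => //.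
by case: [exists _, _].
Qed.

Lemma Phi_onto e : supp e = S -> Phi [ffun i => e (sig i) == o2] = e.
Proof.
move=> hs; apply/ffunP => j; rewrite ffunE.
case: (boolP (j \in S)) => hj; last first.
  by move: hj; rewrite -hs inE negbK => /eqP.
have [i hi] := sig_onto hj; subst j.
have := ex_sig [ffun i => e (sig i) == o2] i; rewrite ffunE => ->.
move: hj; rewrite -hs inE.
by case: (I3_cases (e (sig i))) => ->.
Qed.

Lemma Phi_image : [set Phi b | b in [set: {ffun 'I_#|S| -> bool}]] = [set e | supp e == S].
Proof.
apply/setP => e; rewrite inE; apply/imsetP/eqP => [[b _ ->]|hs].
  exact: Phi_supp.
by exists [ffun i => e (sig i) == o2]; rewrite ?inE // Phi_onto.
Qed.

End Sub.

Local Open Scope R_scope.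
Lemma sum_by_supp n (G : {ffun 'I_n -> 'I_3} -> R) :
  Rsum G = Rsum (fun S : {set 'I_n} => Rsum (fun b : {ffun 'I_#|S| -> bool} => G (Phi b))).
Proof.
rewrite /Rsum (partition_big (@supp n) xpredT) //=.
apply: eq_bigr => S _.
rewrite (eq_bigl (fun e => e \in [set e | supp e == S])); last by move=> e; rewrite inE.
rewrite -Phi_image big_imset /=; last by move=> b b' _ _; apply: Phi_inj.
by apply: eq_bigl => b; rewrite inE.
Qed.

Lemma big_const_in (T : finType) (A : {pred T}) (c : R) :
  \big[Rplus/0]_(x in A) c = INR #|A| * c.
Proof.
rewrite big_const; elim: #|A| => [|k IH] /=; first lra.
rewrite IH; case: k {IH} => [|k] /=; lra.
Qed.

Lemma count_supp n (j : 'I_n) :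
  3 ^ n <= 2 * INR #|[set e : {ffun 'I_n -> 'I_3} | e j != o1]|.
Proof.
set A := [set e : {ffun 'I_n -> 'I_3} | e j == o1].
set B := [set e : {ffun 'I_n -> 'I_3} | e j != o1].
pose h (e : {ffun 'I_n -> 'I_3}) : {ffun 'I_n -> 'I_3} := [ffun t => if t == j then o0 else e t].
have hinj : {in A &, injective h}.
  move=> e e'; rewrite !inE => /eqP he /eqP he' /ffunP H; apply/ffunP => t.
  move: (H t); rewrite !ffunE; case: eqP => [->|//]; by rewrite he he'.
have hsub : [set h x | x in A] \subset B.
  apply/subsetP => e' /imsetP [e _ ->]; by rewrite inE ffunE eqxx.
have h1 : (#|A| <= #|B|)%nat by rewrite -(card_in_imset hinj); apply: subset_leq_card.
have h2 : (#|A| + #|B| = expn 3 n)%nat.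
  have -> : B = ~: A by apply/setP => e; rewrite !inE.
  by rewrite cardsC card_ffun !card_ord.
have h3 : 3 ^ n = INR #|A| + INR #|B|.
  rewrite -plus_INR -card_I3_ffun; congr INR.
  by rewrite card_ffun !card_ord -h2.
have : INR #|A| <= INR #|B| by apply: le_INR; apply/leP.
lra.
Qed.

End SubI.
Import SubI.

Module SubJ.
Local Open Scope R_scope.

Lemma sum_supp_exchange n (L : 'I_n -> R) :
  Rsum (fun e : {ffun 'I_n -> 'I_3} => \big[Rplus/0]_(j in supp e) L j) =
  Rsum (fun j => INR #|[set e : {ffun 'I_n -> 'I_3} | e j != o1]| * L j).
Proof.
rewrite /Rsum.
under eq_bigr do rewrite big_mkcond.
rewrite exchange_big; apply: eq_bigr => j _.
rewrite -big_mkcond /= -big_const_in; apply: eq_bigl => e.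
by rewrite !inE.
Qed.

Lemma shift_io m n (S : {set 'I_n}) (y : pt m n) (z : pt m #|S|) v :
  shift y (fun j => io (fun i => shift z v i) j) =
  shift (shift y (fun j => io (fun i => z i) j)) (io v).
Proof.
apply/ffunP => j; rewrite !ffunE -GRing.addrA; congr GRing.add.
rewrite -io_add; rewrite /io; apply: eq_bigr => i _; by rewrite ffunE.
Qed.

Definition Wf (X : metric_space) (q : R) m n (f : pt m n -> carrier X) (v : 'I_n -> 'Z_(2 * m)) :=
  Rsum (fun x => rpow (Defs.dist (f (shift x v)) (f x)) q).

Lemma Wf_ge0 (X : metric_space) q m n (f : pt m n -> carrier X) v : 0 <= Wf q f v.
Proof. by apply: Rsum_ge0 => x; apply: rpow_ge0. Qed.

Lemma perS (X : metric_space) (q : R) (m n : nat) (C : R) (f : pt m n -> carrier X) (S : {set 'I_n}) :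
  1 <= q -> (0 < m)%nat -> 0 < C ->
  (forall k, (1 <= k)%nat -> (k <= n)%nat -> forall g : pt m k -> carrier X, lhs q g <= C * INR m * rhs1 q g) ->
  Rsum (fun b : {ffun 'I_#|S| -> bool} => \big[Rplus/0]_(j in S) Wf q f (medge m j))
  <= rpow (C * INR m) q * Rsum (fun b : {ffun 'I_#|S| -> bool} => Wf q f (tern m (Phi b))).
Proof.
move=> hq hm hC hyp.
have hq0 : 0 < q by lra.
have hmR : 0 < INR m by apply: lt_0_INR; apply/ltP.
set c := rpow (C * INR m) q.
have hc : 0 <= c by apply: rpow_ge0.
have hRW : 0 <= Rsum (fun b : {ffun 'I_#|S| -> bool} => Wf q f (tern m (Phi b))).
  by apply: Rsum_ge0 => b; apply: Wf_ge0.
case: (posnP #|S|) => hS.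
  have -> : \big[Rplus/0]_(j in S) Wf q f (medge m j) = 0.
    by apply: big_pred0 => j; apply/negP => hj; move: hS; rewrite (cardD1 j) hj.
  rewrite Rsum_const Rmult_0_r; by apply: Rmult_le_pos.
have hSn : (#|S| <= n)%nat by have := max_card S; rewrite card_ord.
pose tau (z : pt m #|S|) := fun j => io (fun i => z i) j.
have key : forall y : pt m n,
  Rsum (fun i : 'I_#|S| => Rsum (fun z : pt m #|S| => rpow (Defs.dist (f (shift (shift y (tau z)) (medge m (sig i)))) (f (shift y (tau z)))) q)) <=
  c * (/ 2 ^ #|S| * Rsum (fun b : {ffun 'I_#|S| -> bool} => Rsum (fun z : pt m #|S| => rpow (Defs.dist (f (shift (shift y (tau z)) (tern m (Phi b)))) (f (shift y (tau z)))) q))).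
  move=> y; have := hyp #|S| hS hSn (fun z => f (shift y (tau z))).
  rewrite /lhs /rhs1 /= => H.
  have hCm : 0 < C * INR m by apply: Rmult_lt_0_compat.
  have H2 := root_le_pow hq0 (Rsum_ge0 (fun i => Rsum_ge0 (fun z => rpow_ge0 _ _)))
     (Rmult_le_pos _ _ (Rlt_le _ _ (Rinv_0_lt_compat _ (pow_lt 2 _ ltac:(lra))))
        (Rsum_ge0 (fun e => Rsum_ge0 (fun z => rpow_ge0 _ _)))) hCm H.
  have ts : forall (z : pt m #|S|) v, shift y (tau (shift z v)) = shift (shift y (tau z)) (io v).
    by move=> z v; exact: shift_io.
  have e1 : Rsum (fun i => Rsum (fun z => rpow (Defs.dist (f (shift y (tau (shift z (medge m i))))) (f (shift y (tau z)))) q))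
     = Rsum (fun i : 'I_#|S| => Rsum (fun z : pt m #|S| => rpow (Defs.dist (f (shift (shift y (tau z)) (medge m (sig i)))) (f (shift y (tau z)))) q)).
    apply: Rsum_ext => i; apply: Rsum_ext => z; rewrite ts.
    have -> : shift (shift y (tau z)) (io (medge m i)) = shift (shift y (tau z)) (medge m (sig i)) => //.
    by apply/ffunP => j; rewrite !ffunE io_medge.
  have e2 : Rsum (fun b => Rsum (fun z => rpow (Defs.dist (f (shift y (tau (shift z (sgnv m b))))) (f (shift y (tau z)))) q))
     = Rsum (fun b : {ffun 'I_#|S| -> bool} => Rsum (fun z : pt m #|S| => rpow (Defs.dist (f (shift (shift y (tau z)) (tern m (Phi b)))) (f (shift y (tau z)))) q)).
    apply: Rsum_ext => b; apply: Rsum_ext => z; rewrite ts.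
    have -> : shift (shift y (tau z)) (io (sgnv m b)) = shift (shift y (tau z)) (tern m (Phi b)) => //.
    by apply/ffunP => j; rewrite !ffunE Phi_tern.
  by rewrite e1 e2 in H2.
have hN : 0 < INR #|pt m #|S| | by apply: card_pt_pos.
have sumL : Rsum (fun y : pt m n => Rsum (fun i : 'I_#|S| => Rsum (fun z : pt m #|S| => rpow (Defs.dist (f (shift (shift y (tau z)) (medge m (sig i)))) (f (shift y (tau z)))) q)))
   = INR #|pt m #|S| | * Rsum (fun i : 'I_#|S| => Wf q f (medge m (sig i))).
  rewrite Rsum_exchange -Rsum_scal; apply: Rsum_ext => i.
  exact: (Rsum_avg tau (fun x => rpow (Defs.dist (f (shift x (medge m (sig i)))) (f x)) q)).
have sumR : Rsum (fun y : pt m n => c * (/ 2 ^ #|S| * Rsum (fun b : {ffun 'I_#|S| -> bool} => Rsum (fun z : pt m #|S| => rpow (Defs.dist (f (shift (shift y (tau z)) (tern m (Phi b)))) (f (shift y (tau z)))) q))))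
   = c * (/ 2 ^ #|S| * (INR #|pt m #|S| | * Rsum (fun b : {ffun 'I_#|S| -> bool} => Wf q f (tern m (Phi b))))).
  rewrite Rsum_scal Rsum_scal Rsum_exchange; do 2 f_equal; rewrite -Rsum_scal.
  apply: Rsum_ext => b.
  exact: (Rsum_avg tau (fun x => rpow (Defs.dist (f (shift x (tern m (Phi b)))) (f x)) q)).
have HL := Rsum_le key; rewrite sumL sumR in HL.
set T := Rsum (fun b : {ffun 'I_#|S| -> bool} => Wf q f (tern m (Phi b))) in HL hRW *.
set U := Rsum (fun i : 'I_#|S| => Wf q f (medge m (sig i))) in HL.
have HU : U <= c * (/ 2 ^ #|S| * T).
  apply: (Rmult_le_reg_l (INR #|pt m #|S| |)) => //; lra.
rewrite Rsum_const card_bool_ffun.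
have -> : \big[Rplus/0]_(j in S) Wf q f (medge m j) = U.
  by rewrite big_enum_val.
have h2k : 0 < 2 ^ #|S| by apply: pow_lt; lra.
apply: Rle_trans (Rmult_le_compat_l _ _ _ (Rlt_le _ _ h2k) HU) _.
right; field; lra.
Qed.

Lemma part1_core (X : metric_space) (q : R) (m n : nat) (C : R) :
  1 <= q -> (0 < m)%nat -> 0 < C ->
  (forall k, (1 <= k)%nat -> (k <= n)%nat -> forall g : pt m k -> carrier X, lhs q g <= C * INR m * rhs1 q g) ->
  forall f : pt m n -> carrier X, lhs q f <= (rpow 6 (/ q) * C) * INR m * rhs0 q f.
Proof.
move=> hq hm hC hyp f.
have hq0 : 0 < q by lra.
have hmR : 0 < INR m by apply: lt_0_INR; apply/ltP.
set c := rpow (C * INR m) q.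
have hc : 0 <= c by apply: rpow_ge0.
have H1 : Rsum (fun e : {ffun 'I_n -> 'I_3} => \big[Rplus/0]_(j in supp e) Wf q f (medge m j))
   <= c * Rsum (fun e : {ffun 'I_n -> 'I_3} => Wf q f (tern m e)).
  rewrite (sum_by_supp (fun e => \big[Rplus/0]_(j in supp e) Wf q f (medge m j))).
  rewrite (sum_by_supp (fun e => Wf q f (tern m e))) -Rsum_scal.
  apply: Rsum_le => S.
  rewrite (Rsum_ext (G := fun b : {ffun 'I_#|S| -> bool} => \big[Rplus/0]_(j in S) Wf q f (medge m j))); last first.
    by move=> b; rewrite Phi_supp.
  exact: perS.
rewrite sum_supp_exchange in H1.
set L := Rsum (fun j => Wf q f (medge m j)).
set T := Rsum (fun e : {ffun 'I_n -> 'I_3} => Wf q f (tern m e)) in H1.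
have h3n : 0 < 3 ^ n by apply: pow_lt; lra.
have hL0 : 0 <= L by apply: Rsum_ge0 => j; apply: Wf_ge0.
have hT0 : 0 <= T by apply: Rsum_ge0 => j; apply: Wf_ge0.
have H2 : 3 ^ n * L <= 2 * (c * T).
  rewrite -Rsum_scal; apply: Rle_trans (Rmult_le_compat_l 2 _ _ ltac:(lra) H1).
  rewrite -Rsum_scal; apply: Rsum_le => j.
  have := count_supp j; have := Wf_ge0 q f (medge m j); nra.
rewrite /lhs /rhs0.
apply: pow_le_root => //.
- by apply: Rmult_le_pos; [left; apply: Rinv_0_lt_compat|].
- apply: Rmult_lt_0_compat; [|lra]; apply: Rmult_lt_0_compat => //; apply: rpow_gt0; lra.
rewrite Rmult_assoc rpow_mul; [|apply: rpow_ge0|apply: Rmult_le_pos; lra].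
rewrite rpow_inv'; [|lra|lra].
fold c.
apply: Rle_trans (_ : L <= 6 * c * (/ 3 ^ n * T)) _; last by right.
apply: (Rmult_le_reg_l (3 ^ n)) => //.
have : 0 <= c * T by apply: Rmult_le_pos.
have -> : 3 ^ n * (6 * c * (/ 3 ^ n * T)) = 6 * (c * T) by field; lra.
lra.
Qed.

End SubJ.
Import SubJ.

Local Open Scope R_scope.

Lemma adm0_pos X q m n C : admissible0 X q m n C -> 0 <= C.
Proof. by case=> h _; lra. Qed.
Lemma adm1_pos X q m n C : admissible1 X q m n C -> 0 <= C.
Proof. by case=> h _; lra. Qed.

Lemma C_pm0_spec X q m n : is_einf (admissible0 X q m n) (C_pm0 X q m n).
Proof. exact: einf_spec (@adm0_pos X q m n). Qed.
Lemma C_pm1_spec X q m n : is_einf (admissible1 X q m n) (C_pm1 X q m n).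
Proof. exact: einf_spec (@adm1_pos X q m n). Qed.

Lemma adm1_up X q m n C C' : admissible1 X q m n C -> C <= C' ->
  admissible1 X q m n C'.
Proof.
move=> [hC h] hCC'; split; first lra.
move=> f; apply: Rle_trans (h f) _.
rewrite !Rmult_assoc; apply: Rmult_le_compat_r => //.
apply: Rmult_le_pos; [apply: pos_INR| apply: rpow_ge0].
Qed.

Lemma glb_approx (P : R -> Prop) a eta : is_glb P a -> 0 < eta -> exists C, P C /\ C < a + eta.
Proof.
move=> [_ h2] he; apply: NNPP => hn.
have : a + eta <= a.
  apply: h2 => C hC; apply: Rnot_lt_le => hlt; apply: hn; by exists C.
lra.
Qed.

Theorem mainTheorem12 (X : metric_space) (q : R) (m n : nat) :
  1 <= q -> (0 < m)%nat ->
  ele (C_pm0 X q m n) (escale (rpow 6 (/ q)) (emax_range (fun k => C_pm1 X q m k) n)) /\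
  ele (C_pm1 X q (2 * m) n) (escale 2 (C_pm0 X q m n)).
Proof.
move=> hq hm; split.
- have s0 := C_pm0_spec X q m n.
  case EM: (emax_range _ n) => [K|]; last by case: (C_pm0 X q m n).
  have [hK hk] := emax_range_spec EM.
  have r6 : 0 < rpow 6 (/ q) by apply: rpow_gt0; lra.
  have adm : forall eta, 0 < eta -> admissible0 X q m n (rpow 6 (/ q) * (K + eta)).
    move=> eta he; split; first by apply: Rmult_lt_0_compat => //; lra.
    apply: part1_core => //; first lra.
    move=> k h1 h2 g.
    have [c [hc1 hc2]] := hk k h1 ltac:(lia).
    have s1 := C_pm1_spec X q m k; rewrite hc1 in s1.
    have [C' [hC'1 hC'2]] := glb_approx s1 he.
    have : admissible1 X q m k (K + eta) by apply: adm1_up hC'1 _; lra.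
    by case=> _ /(_ g).
  move: s0; case: (C_pm0 X q m n) => [a|] s0 /=; last first.
    by exfalso; apply: (s0 _ (adm 1 ltac:(lra))).
  apply: Rle_plus_epsilon => eps he.
  have he' : 0 < eps / rpow 6 (/ q) by apply: Rdiv_lt_0_compat.
  have := proj1 s0 _ (adm _ he').
  have -> : rpow 6 (/ q) * (K + eps / rpow 6 (/ q)) = rpow 6 (/ q) * K + eps by field; lra.
  done.
- have s0 := C_pm0_spec X q m n.
  have s1 := C_pm1_spec X q (2 * m) n.
  move: s0; case: (C_pm0 X q m n) => [a|] s0; last by case: (C_pm1 X q (2 * m) n).
  have [C0 hC0] := einf_some_ne s0.
  have up : forall C, admissible0 X q m n C -> admissible1 X q (2 * m) n (2 * C).
    move=> C [hC h]; split; first lra.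
    by apply: part2_core.
  move: s1; case: (C_pm1 X q (2 * m) n) => [a1|] s1 /=; last first.
    by exfalso; apply: (s1 _ (up _ hC0)).
  suff : a1 / 2 <= a by lra.
  apply: (proj2 s0) => C hC.
  have := proj1 s1 _ (up _ hC); lra.
Qed.
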